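(* Assume hypotheses (A) and (B) and that $p_{ij}=p<1/(d-1)$ for all $i\ne j$. Let $q=p/(1-(d-2)p)$. Let $\gamma=(\gamma_1,\dots,\gamma_d)$ satisfy $0<\gamma_i<\mu_i/\nu_i-1$ for all $i$ and $$\sum_{j=1}^d\frac{\max_{1\le i\le d}\log(1+q\gamma_i)-\log(1+q\gamma_j)}{\log(1+\gamma_j)-\log(1+q\gamma_j)}<1.$$ Then the function $h_\gamma(x)=\sum_{i=1}^d(1+\gamma_i)^{x^i}(1+q\gamma_i)^{\sum_{j\ne i}x^j}$ satisfies $$\limsup_{|x|\to\infty}\frac{\mathcal{L}h_\gamma(x)}{h_\gamma(x)}=-\Bigl(1-\frac{(d-1)p^2}{1-(d-2)p}\Bigr)\min_{1\le i\le d}\gamma_i\Bigl(\frac{\mu_i}{1+\gamma_i}-\nu_i\Bigr)<0.$$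
   Context: Jackson network with $d$ queues: arrival rates $\lambda_i\ge0$, service rates $\mu_i>0$, routing matrix $P=(p_{ij})_{i,j=1}^d$ nonnegative with $p_{ii}=0$, $\sum_jp_{ij}\le1$, $p_{i0}=1-\sum_jp_{ij}$. With $\epsilon^i$ the unit vectors, $q(\epsilon^i)=\lambda_i$, $q(-\epsilon^i)=\mu_ip_{i0}$, $q(\epsilon^j-\epsilon^i)=\mu_ip_{ij}$, zero otherwise (this jump kernel, not the scalar $q$ of the claim); the process on $\mathbb{Z}_+^d$ has generator $\mathcal{L}f(y)=\sum_{z\in\mathbb{Z}_+^d}q(z-y)(f(z)-f(y))$. Hypothesis (A): this kernel is irreducible on $\mathbb{Z}^d$ (equivalently spectral radius of $P$ $<1$ and for every $i$ some $\lambda_jp^{(n)}_{ji}>0$); then the traffic equations $\nu_j=\lambda_j+\sum_i\nu_ip_{ij}$ have a unique solution with $\nu_i>0$. Hypothesis (B): $\nu_i<\mu_i$ for all $i$. *)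

(* Defs.v *)
From HB Require Import structures.
From mathcomp Require Import all_boot all_order all_algebra.
From mathcomp Require Import all_classical all_reals all_analysis.
From Stdlib Require Import Relations.
Set Implicit Arguments. Unset Strict Implicit. Unset Printing Implicit Defensive.
Import Order.TTheory GRing.Theory Num.Theory.
Local Open Scope ring_scope.

Section Jackson.
Variables (R : realType) (d : nat).
Variables (lam mu : 'I_d -> R) (P : 'I_d -> 'I_d -> R).

Definition pexit (i : 'I_d) : R := 1 - \sum_(j < d) P i j.

Definition unitv (i : 'I_d) : 'rV[int]_d := delta_mx 0 i.

Definition jkernel (z : 'rV[int]_d) : R :=
  \sum_(i < d) (z == unitv i)%:R * lam i
  + \sum_(i < d) (z == - unitv i)%:R * (mu i * pexit i)
  + \sum_(i < d) \sum_(j < d | j != i) (z == unitv j - unitv i)%:R * (mu i * P i j).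

Definition kernel_irreducible : Prop :=
  forall y z : 'rV[int]_d,
    clos_refl_trans _ (fun a b => 0 < jkernel (b - a)) y z.

Definition incr (y : 'I_d -> nat) (i : 'I_d) : 'I_d -> nat :=
  fun k => (y k + (k == i))%N.
Definition decr (y : 'I_d -> nat) (i : 'I_d) : 'I_d -> nat :=
  fun k => (y k - (k == i))%N.

(* generator  L f(y) = sum_{z in Z_+^d} q(z - y) (f z - f y), written out:
   the only z in Z_+^d with q(z-y) <> 0 are y+e_i, y-e_i (if y_i > 0) and
   y+e_j-e_i (j <> i, if y_i > 0). *)
Definition gen (f : ('I_d -> nat) -> R) (y : 'I_d -> nat) : R :=
  \sum_(i < d) lam i * (f (incr y i) - f y)
  + \sum_(i < d) (0 < y i)%N%:R * (mu i * pexit i) * (f (decr y i) - f y)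
  + \sum_(i < d) \sum_(j < d | j != i)
      (0 < y i)%N%:R * (mu i * P i j) * (f (incr (decr y i) j) - f y).

Definition hgamma (q : R) (g : 'I_d -> R) (x : 'I_d -> nat) : R :=
  \sum_(i < d) (1 + g i) ^+ x i * (1 + q * g i) ^+ (\sum_(j < d | j != i) x j)%N.

Definition norm1 (x : 'I_d -> nat) : nat := (\sum_(i < d) x i)%N.

Definition limsup_infty_eq (f : ('I_d -> nat) -> R) (l : R) : Prop :=
  (forall e : R, 0 < e -> exists N : nat,
      forall x, (N <= norm1 x)%N -> f x <= l + e) /\
  (forall e : R, 0 < e -> forall N : nat,
      exists x, (N <= norm1 x)%N /\ l - e <= f x).

End Jackson.

(* Main.v *)
Require Import Defs.
From HB Require Import structures.
From mathcomp Require Import all_boot all_order all_algebra.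
From mathcomp Require Import all_classical all_reals all_analysis.
From mathcomp Require Import ring lra.
Import Order.TTheory GRing.Theory Num.Theory.
Set Implicit Arguments. Unset Strict Implicit. Unset Printing Implicit Defensive.
Local Open Scope ring_scope.

Lemma gen_sum (R : realType) d (lam mu : 'I_d -> R) P
  (fs : 'I_d -> ('I_d -> nat) -> R) y :
  gen lam mu P (fun z => \sum_(i < d) fs i z) y
  = \sum_(i < d) gen lam mu P (fs i) y.
Proof.
rewrite /gen big_split big_split /=.
congr (_ + _ + _).
- rewrite exchange_big /=; apply: eq_bigr => k _.
  by rewrite -sumrB mulr_sumr.
- rewrite exchange_big /=; apply: eq_bigr => k _.
  by rewrite -sumrB mulr_sumr.
- rewrite exchange_big /=; apply: eq_bigr => k _.
  rewrite exchange_big /=; apply: eq_bigr => j _.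
  by rewrite -sumrB mulr_sumr.
Qed.

Lemma prod_incr (R : realType) d (F : 'I_d -> R) y k :
  \prod_(m < d) F m ^+ incr y k m = (\prod_(m < d) F m ^+ y m) * F k.
Proof.
rewrite /incr; under eq_bigr do rewrite exprD.
rewrite big_split /=; congr (_ * _).
rewrite (bigD1 k) //= eqxx expr1 big1 ?mulr1 // => m /negbTE ->.
by rewrite expr0.
Qed.

Lemma incr_decr d (y : 'I_d -> nat) k : (0 < y k)%N -> incr (decr y k) k = y.
Proof.
move=> yk; apply/funext => m; rewrite /incr /decr.
case: eqVneq => [->|_] /=; last by rewrite subn0 addn0.
by rewrite addn1 subn1 prednK.
Qed.

Lemma prod_decr (R : realType) d (F : 'I_d -> R) y k :
  F k != 0 -> (0 < y k)%N ->
  \prod_(m < d) F m ^+ decr y k m = (\prod_(m < d) F m ^+ y m) / F k.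
Proof.
move=> Fk yk.
by rewrite -[in RHS](incr_decr yk) prod_incr mulfK.
Qed.

Lemma gen_prod (R : realType) d (lam mu : 'I_d -> R) P (F : 'I_d -> R) y :
  (forall m, F m != 0) ->
  gen lam mu P (fun z => \prod_(m < d) F m ^+ z m) y =
  (\prod_(m < d) F m ^+ y m) *
  (\sum_(k < d) lam k * (F k - 1)
   + \sum_(k < d) (0 < y k)%N%:R * (mu k / F k) *
       (pexit P k * (1 - F k) + \sum_(j < d | j != k) P k j * (F j - F k))).
Proof.
move=> HF; rewrite /gen -addrA mulrDr; congr (_ + _).
  rewrite mulr_sumr; apply: eq_bigr => k _; rewrite prod_incr; ring.
rewrite mulr_sumr -big_split; apply: eq_bigr => k _ /=.
case: (posnP (y k)) => [yk0|yk] /=.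
  rewrite !mul0r mulr0 add0r big1 // => j _; by rewrite !mul0r.
set Phi := \prod_(m < d) F m ^+ y m.
rewrite prod_decr //.
rewrite [X in _ + X = _](eq_bigr (fun j => 1 * (mu k * P k j) * (Phi * F j / F k - Phi))); last first.
  by move=> j _; rewrite prod_incr prod_decr // -/Phi; ring.
rewrite -/Phi !mul1r mulrA [in RHS]mulrDr mulr_sumr.
congr (_ + _); first by field.
by apply: eq_bigr => j _; field.
Qed.
Lemma sum_neq (R : realType) d (F : 'I_d -> R) k :
  \sum_(j < d | j != k) F j = \sum_(j < d) F j - F k.
Proof. by rewrite [\sum_(j < d) F j](bigD1 k) //= addrC addrK. Qed.

Lemma sum_cst (R : realType) d (c : R) : \sum_(j < d) c = d%:R * c.
Proof. by rewrite sumr_const card_ord mulr_natl. Qed.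

Section Spec.
Variables (R : realType) (d : nat) (lam mu nu : 'I_d -> R).
Variables (P : 'I_d -> 'I_d -> R) (p q : R) (g : 'I_d -> R).
Hypothesis Pii : forall i, P i i = 0.
Hypothesis Pij : forall i j, i != j -> P i j = p.
Hypothesis traffic : forall j, nu j = lam j + \sum_(i < d) nu i * P i j.
Hypothesis hden : 1 - (d%:R - 2) * p != 0.
Hypothesis hq : q = p / (1 - (d%:R - 2) * p).
Hypothesis ga : forall i, 1 + g i != 0.
Hypothesis gb : forall i, 1 + q * g i != 0.

Definition cc := 1 - (d%:R - 1) * p ^+ 2 / (1 - (d%:R - 2) * p).
Definition FF (i m : 'I_d) := if m == i then 1 + g i else 1 + q * g i.

Lemma sumFF i : \sum_(m < d) FF i m = 1 + g i + (d%:R - 1) * (1 + q * g i).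
Proof.
rewrite (bigD1 i) //= /FF eqxx; congr (_ + _).
rewrite (eq_bigr (fun _ => 1 + q * g i)); last by move=> m /negbTE ->.
by rewrite sum_neq sum_cst; ring.
Qed.

Lemma sumP k : \sum_(j < d) P k j = (d%:R - 1) * p.
Proof.
rewrite (bigD1 k) //= Pii add0r.
rewrite (eq_bigr (fun _ => p)); last by move=> j jk; rewrite Pij // eq_sym.
by rewrite sum_neq sum_cst; ring.
Qed.

Lemma sum_nuP j : \sum_(i < d) nu i * P i j = p * (\sum_(i < d) nu i - nu j).
Proof.
rewrite (bigD1 j) //= Pii mulr0 add0r.
rewrite (eq_bigr (fun i => p * nu i)); last by move=> i ij; rewrite Pij // mulrC.
by rewrite sum_neq -mulr_sumr mulrBr.
Qed.

Lemma lam_eq j : lam j = nu j - p * (\sum_(i < d) nu i - nu j).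
Proof. by rewrite -sum_nuP [nu j]traffic addrK. Qed.

Lemma sum_lam : \sum_(j < d) lam j = \sum_(i < d) nu i * (1 - (d%:R - 1) * p).
Proof.
under eq_bigr do rewrite lam_eq.
rewrite sumrB -mulr_sumr sumrB sum_cst -mulr_suml.
ring.
Qed.

Lemma Dk i k : pexit P k * (1 - FF i k) + \sum_(j < d | j != k) P k j * (FF i j - FF i k)
  = if k == i then - (cc * g i) else 0.
Proof.
rewrite /pexit sumP.
rewrite (eq_bigr (fun j => p * (FF i j - FF i k))); last first.
  by move=> j jk; rewrite Pij // eq_sym.
rewrite sum_neq subrr mulr0 subr0 -mulr_sumr sumrB sumFF sum_cst /cc /FF.
case: ifP => _; rewrite hq; field; done.
Qed.

Lemma arr i : \sum_(k < d) lam k * (FF i k - 1) = cc * g i * nu i.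
Proof.
rewrite (bigD1 i) //= {1}/FF eqxx.
rewrite (eq_bigr (fun k => lam k * (q * g i))); last first.
  by move=> k /negbTE ki; rewrite /FF ki; ring.
rewrite -mulr_suml (sum_neq lam) sum_lam lam_eq -mulr_suml /cc hq.
field; done.
Qed.


Lemma FF_prod i x : \prod_(m < d) FF i m ^+ x m
  = (1 + g i) ^+ x i * (1 + q * g i) ^+ (\sum_(j < d | j != i) x j)%N.
Proof.
rewrite (bigD1 i) //= /FF eqxx; congr (_ * _).
rewrite (eq_bigr (fun m => (1 + q * g i) ^+ x m)); last by move=> m /negbTE ->.
by rewrite prodrXr.
Qed.

Lemma FF_neq0 i m : FF i m != 0.
Proof. by rewrite /FF; case: ifP. Qed.

Lemma gen_h y : gen lam mu P (hgamma q g) y =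
  \sum_(i < d) (\prod_(m < d) FF i m ^+ y m) *
    (cc * g i * nu i - (0 < y i)%N%:R * (cc * g i * mu i / (1 + g i))).
Proof.
have -> : hgamma q g = fun z => \sum_(i < d) \prod_(m < d) FF i m ^+ z m.
  by apply/funext => z; rewrite /hgamma; apply: eq_bigr => i _; rewrite FF_prod.
rewrite gen_sum; apply: eq_bigr => i _.
rewrite gen_prod; last by move=> m; exact: FF_neq0.
congr (_ * _); rewrite arr; congr (_ + _).
under eq_bigr do rewrite Dk.
rewrite (bigD1 i) //= eqxx big1 ?addr0; last first.
  by move=> k /negbTE ->; rewrite mulr0.
rewrite /FF eqxx; field; done.
Qed.

End Spec.

Lemma le_term_sum (R : realType) d (F : 'I_d -> R) k :
  (forall i, 0 <= F i) -> F k <= \sum_(i < d) F i.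
Proof. by move=> F0; rewrite (bigD1 k) //= lerDl sumr_ge0. Qed.

Theorem corollary3p2 (R : realType) (d : nat)
  (lam mu : 'I_d -> R) (P : 'I_d -> 'I_d -> R) (nu : 'I_d -> R) (p : R)
  (gamma : 'I_d -> R) :
  (2 <= d)%N ->
  (forall i, 0 <= lam i) ->
  (forall i, 0 < mu i) ->
  (forall i j, 0 <= P i j) ->
  (forall i, P i i = 0) ->
  (forall i, \sum_(j < d) P i j <= 1) ->
  (* hypothesis (A) *)
  kernel_irreducible lam mu P ->
  (* nu is the solution of the traffic equations *)
  (forall j, nu j = lam j + \sum_(i < d) nu i * P i j) ->
  (forall i, 0 < nu i) ->
  (* hypothesis (B) *)
  (forall i, nu i < mu i) ->
  (forall i j, i != j -> P i j = p) ->
  p < 1 / (d%:R - 1) ->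
  let q := p / (1 - (d%:R - 2) * p) in
  (forall i, 0 < gamma i /\ gamma i < mu i / nu i - 1) ->
  \sum_(j < d)
     (sup (range (fun i => ln (1 + q * gamma i))) - ln (1 + q * gamma j))
     / (ln (1 + gamma j) - ln (1 + q * gamma j)) < 1 ->
  let L := - (1 - (d%:R - 1) * p ^+ 2 / (1 - (d%:R - 2) * p))
             * inf (range (fun i => gamma i * (mu i / (1 + gamma i) - nu i))) in
  limsup_infty_eq
    (fun x => gen lam mu P (hgamma q gamma) x / hgamma q gamma x) L
  /\ L < 0.
Proof.
move=> d2 lam0 mu0 P0 Pii Psum _ traffic nu0 numu Pij plt q hg hcond L.
have d0 : (0 < d)%N by apply: leq_trans d2.
pose i0 : 'I_d := Ordinal d0.
pose i1 : 'I_d := Ordinal d2.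
have i01 : i0 != i1 by rewrite -val_eqE.
have p0 : 0 <= p by rewrite -(Pij i0 i1 i01).
have D2 : 2 <= d%:R :> R by rewrite (ler_nat R 2 d).
have D1 : 0 < d%:R - 1 :> R by lra.
have hp1 : (d%:R - 1) * p < 1 by move: plt; rewrite ltr_pdivlMr // mulrC.
have den0 : 0 < 1 - (d%:R - 2) * p.
  have : (d%:R - 2) * p <= (d%:R - 1) * p by apply: ler_wpM2r => //; lra.
  lra.
have q0 : 0 <= q by rewrite /q divr_ge0 // ltW.
have q1 : q < 1.
  rewrite /q ltr_pdivrMr // mul1r.
  have -> : 1 - (d%:R - 2) * p = 1 - (d%:R - 1) * p + p by ring.
  lra.
have c0 : 0 < cc d p.
  rewrite /cc subr_gt0 ltr_pdivrMr // mul1r.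
  have := ler_wpM2r p0 (ltW hp1); rewrite mul1r => h1.
  have -> : 1 - (d%:R - 2) * p = 1 - (d%:R - 1) * p + p by ring.
  rewrite expr2 mulrA; lra.
have a0 i : 0 < 1 + gamma i by have [? ?] := hg i; lra.
have b0 i : 0 < 1 + q * gamma i.
  by have [? ?] := hg i; have := mulr_ge0 q0 (ltW (hg i).1); lra.
pose G i := gamma i * (mu i / (1 + gamma i) - nu i).
have G0 i : 0 < G i.
  have [g0 g1] := hg i.
  rewrite /G mulr_gt0 // subr_gt0 ltr_pdivlMr //.
  have : 1 + gamma i < mu i / nu i by lra.
  by rewrite ltr_pdivlMr // mulrC.
pose m := inf (range G).
have hlb : has_lbound (range G).
  by exists 0 => _ [i _ <-]; exact: ltW.
have Gm i : m <= G i by apply: ge_inf => //; exists i.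
have m0 : 0 < m.
  pose S := \sum_(k < d) (G k)^-1.
  have S0 : 0 < S.
    rewrite /S (bigD1 i0) //=; apply: ltr_wpDr; last by rewrite invr_gt0.
    by apply: sumr_ge0 => k _; rewrite invr_ge0 ltW.
  apply: (@lt_le_trans _ _ S^-1); first by rewrite invr_gt0.
  apply: lb_le_inf; first by exists (G i0), i0.
  move=> _ [i _ <-].
  rewrite -div1r ler_pdivrMr //.
  have h1 : (G i)^-1 <= S.
    by apply: (@le_term_sum _ _ (fun k => (G k)^-1) i) => k; rewrite invr_ge0 ltW.
  have := ler_wpM2l (ltW (G0 i)) h1.
  by rewrite mulfV ?lt0r_neq0.
have LE : L = - cc d p * m by [].
have L0 : L < 0 by rewrite LE mulNr oppr_lt0 mulr_gt0.
split; last exact: L0.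
pose f i (x : 'I_d -> nat) := \prod_(k < d) FF q gamma i k ^+ x k.
pose r i (x : 'I_d -> nat) := cc d p * gamma i * nu i
   - (0 < x i)%N%:R * (cc d p * gamma i * mu i / (1 + gamma i)).
have hgen x : gen lam mu P (hgamma q gamma) x = \sum_(i < d) f i x * r i x.
  apply: (gen_h mu Pii Pij traffic (lt0r_neq0 den0)) => // i.
    exact: lt0r_neq0.
  exact: lt0r_neq0.
have hh x : hgamma q gamma x = \sum_(i < d) f i x.
  by rewrite /hgamma; apply: eq_bigr => i _; rewrite /f FF_prod.
have f0 i x : 0 < f i x.
  apply: prodr_gt0 => k _; apply: exprn_gt0; rewrite /FF; case: ifP => _ //.
have h0 x : 0 < hgamma q gamma x.
  by rewrite hh (bigD1 i0) //= ltr_wpDr // sumr_ge0 // => k _; exact: ltW.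
have fle i x : f i x <= hgamma q gamma x.
  by rewrite hh; apply: le_term_sum => k; exact: ltW.
have rpos i x : x i = 0%N -> r i x = cc d p * gamma i * nu i.
  by move=> xi; rewrite /r xi mul0r subr0.
have rneg i x : (0 < x i)%N -> r i x = - cc d p * G i.
  by move=> xi; rewrite /r xi /G /=; ring.
have cgn0 i : 0 <= cc d p * gamma i * nu i.
  by rewrite mulr_ge0 // ?mulr_ge0 // ltW // (hg i).1.
split; last first.
  move=> e e0 N.
  have hinf : has_inf (range G) by split => //; exists (G i0), i0.
  have [_ [i _ <-] Gi] := inf_adherent (divr_gt0 e0 c0) hinf.
  pose x : 'I_d -> nat := fun k => if k == i then N.+1 else 0%N.
  exists x; split.
    rewrite /norm1 (bigD1 i) //= /x eqxx big1 ?addn0 // => k /negbTE ->.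
    by [].
  rewrite hgen ler_pdivlMr // (bigD1 i) //=.
  have rest : 0 <= \sum_(k < d | k != i) f k x * r k x.
    apply: sumr_ge0 => k /negbTE ki.
    by rewrite rpos /x ?ki // mulr_ge0 // ltW.
  rewrite rneg /x ?eqxx //.
  have h1 : L - e <= - cc d p * G i.
    have : cc d p * G i < cc d p * (m + e / cc d p) by rewrite ltr_pM2l.
    rewrite mulrDr (mulrC (cc d p) (e / cc d p)) divfK ?lt0r_neq0 // LE; lra.
  have h2 : - cc d p * G i * hgamma q gamma x <= - cc d p * G i * f i x.
    apply: ler_wnM2l; last exact: fle.
    by rewrite mulNr oppr_le0 mulr_ge0 // ltW.
  have h3 := ler_wpM2r (ltW (h0 x)) h1.
  rewrite /x in h2 h3 *; lra.
move=> e e0.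
set B := sup (range (fun i => ln (1 + q * gamma i))) in hcond.
pose al i := ln (1 + gamma i).
pose be i := ln (1 + q * gamma i).
pose w i := al i - be i.
have w0 i : 0 < w i.
  rewrite /w /al /be subr_gt0 ltr_ln ?posrE //.
  have [g0 _] := hg i.
  have : q * gamma i < 1 * gamma i by rewrite ltr_pM2r.
  lra.
have hsup : has_sup (range be).
  split; first by exists (be i0), i0.
  exists (\sum_(k < d) `|be k|) => _ [j _ <-].
  apply: le_trans (ler_norm _) _.
  by apply: (@le_term_sum _ _ (fun k => `|be k|) j) => k.
have Bub j : be j <= B by apply: sup_upper_bound => //; exists j.
pose t := \sum_(j < d) (B - be j) / w j.
have ht : t < 1 by [].
pose u := \sum_(j < d) (w j)^-1.
have u0 : 0 < u.
  rewrite /u (bigD1 i0) //=; apply: ltr_wpDr; last by rewrite invr_gt0.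
  by apply: sumr_ge0 => k _; rewrite invr_ge0 ltW.
pose de := (1 - t) / u.
have de0 : 0 < de by rewrite /de divr_gt0 // subr_gt0.
have tdu : t + de * u = 1 by rewrite /de divfK ?lt0r_neq0 //; ring.
have lnf i x : ln (f i x) = al i * (x i)%:R + be i * ((norm1 x)%:R - (x i)%:R).
  rewrite /f FF_prod lnM ?posrE ?exprn_gt0 // !lnXn //.
  have -> : norm1 x = (x i + \sum_(j < d | j != i) x j)%N by rewrite /norm1 (bigD1 i).
  by rewrite natrD (addrC (x i)%:R) addrK !mulr_natr.
have exk x : exists k, (norm1 x)%:R * (B + de) <= ln (f k x).
  case: (boolP [exists k, (norm1 x)%:R * (B + de) <= ln (f k x)]).
    by move=> /existsP [k hk]; exists k.
  rewrite negb_exists => /forallP hall; exfalso.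
  set s := (norm1 x)%:R : R.
  have hk k : (x k)%:R < s * (B - be k + de) / w k.
    have := hall k; rewrite -ltNge lnf -/s => hl.
    rewrite ltr_pdivlMr //.
    have : (x k)%:R * w k = al k * (x k)%:R - be k * (x k)%:R by rewrite /w; ring.
    move=> ->; lra.
  have hs : s = \sum_(k < d) (x k)%:R :> R by rewrite /s /norm1 natr_sum.
  have hlt : \sum_(k < d) (x k)%:R < \sum_(k < d) s * (B - be k + de) / w k :> R.
    apply: ltr_sum => [|k _]; last exact: hk.
    by apply/hasP; exists i0; rewrite ?mem_index_enum.
  have hsum : \sum_(k < d) s * (B - be k + de) / w k = s * (t + de * u).
    rewrite /t /u mulr_sumr -big_split mulr_sumr; apply: eq_bigr => k _ /=.
    by field; rewrite lt0r_neq0.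
  by move: hlt; rewrite hsum tdu mulr1 -hs ltxx.
have fsmall i x : x i = 0%N ->
    f i x <= hgamma q gamma x * expR (- ((norm1 x)%:R * de)).
  move=> xi0; have [k hk] := exk x.
  set s := (norm1 x)%:R : R in hk *.
  have s0 : 0 <= s by rewrite /s ler0n.
  apply: (@le_trans _ _ (f k x * expR (- (s * de)))); last first.
    by apply: ler_wpM2r; [exact: ltW (expR_gt0 _) | exact: fle].
  rewrite -{1}(lnK (f0 i x : f i x \in Num.pos)) -{1}(lnK (f0 k x : f k x \in Num.pos)).
  rewrite -expRD ler_expR lnf xi0 /= mulr0 add0r subr0 -/s.
  have := ler_wpM2r s0 (Bub i).
  lra.
pose K := \sum_(i < d) cc d p * gamma i * nu i.
have K0 : 0 <= K by apply: sumr_ge0 => i _.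
have KL : 0 < K - L by lra.
pose M := d%:R * (K - L).
have M0 : 0 < M by rewrite /M mulr_gt0 //; lra.
pose eps := e / M.
have eps0 : 0 < eps by exact: divr_gt0.
exists (Num.bound (1 / (eps * de))) => x Nx.
set s := (norm1 x)%:R : R.
have hE : expR (- (s * de)) <= eps.
  have hb := archi_boundP (ltW (divr_gt0 ltr01 (mulr_gt0 eps0 de0))).
  have sN : (Num.bound (1 / (eps * de)))%:R <= s by rewrite /s ler_nat.
  have h1 : 1 / (eps * de) < s by exact: lt_le_trans hb sN.
  move: h1; rewrite ltr_pdivrMr; last exact: mulr_gt0 eps0 de0.
  move=> h1.
  rewrite expRN -div1r ler_pdivrMr ?expR_gt0 //.
  have h2 := expR_ge1Dx (s * de).
  have h3 : eps * (1 + s * de) <= eps * expR (s * de) by rewrite ler_pM2l.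
  nra.
have hE0 : 0 <= expR (- (s * de)) by exact: ltW (expR_gt0 _).
rewrite hgen ler_pdivrMr //.
set h := hgamma q gamma x.
have term i : f i x * r i x <= L * f i x + (K - L) * (h * eps).
  have fi0 := f0 i x.
  have hKL : 0 <= (K - L) * (h * eps).
    by apply: mulr_ge0; [exact: ltW | apply: mulr_ge0; [exact: ltW (h0 x) | exact: ltW]].
  case: (posnP (x i)) => [xi0|xi].
    rewrite rpos //.
    have rK : cc d p * gamma i * nu i <= K.
      exact: (@le_term_sum _ _ (fun i => cc d p * gamma i * nu i) i).
    have hf : f i x <= h * eps.
      apply: le_trans (fsmall i x xi0) _.
      by rewrite ler_pM2l // ?h0.
    have := ler_wpM2l (ltW fi0) rK.
    have := ler_wpM2l (ltW KL) hf.
    nra.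
  rewrite rneg //.
  have hL : - cc d p * G i <= L by rewrite LE !mulNr lerN2 ler_pM2l.
  have := ler_wpM2l (ltW fi0) hL.
  nra.
apply: le_trans (ler_sum _ (fun i _ => term i)) _.
rewrite big_split /= -mulr_sumr -hh -/h sum_cst.
have -> : d%:R * ((K - L) * (h * eps)) = e * h.
  by rewrite /eps /M; field; rewrite lt0r_neq0 //; lra.
lra.
Qed.
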